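(* Let $X\in\mathbb{R}^{n\times nN}$ and $U\in\mathbb{R}^{m\times nN}$ satisfy $AX+BU=X(P\otimes I_n)$ and $X(\mathrm{e}_1\otimes I_n)=I_n$. Then $\Psi=\begin{bmatrix}X\\ Z\end{bmatrix}\in\mathbb{R}^{nN\times nN}$ is invertible, and if $(K,H,G,F)$ is the (unique) solution of $\begin{bmatrix} K & H \\ G & F \end{bmatrix}\Psi=\begin{bmatrix} U \\ V \end{bmatrix}$, then the closed-loop matrix $\mathcal{A}_{cl}=\begin{bmatrix}A+BK & BH\\ G & F\end{bmatrix}$ satisfies $\mathcal{A}_{cl}=\Psi(P\otimes I_n)\Psi^{-1}$.
   Context: $A\in\mathbb{R}^{n\times n}$, $B\in\mathbb{R}^{n\times m}$, $N\ge 2$. $\mathrm{e}_1\in\mathbb{R}^N$ is the first standard basis vector. $P\in\mathbb{R}^{N\times N}$ is the nilpotent shift matrix $P=\begin{bmatrix}0 & 0\\ I_{N-1} & 0\end{bmatrix}$. $\otimes$ is the Kronecker product. $Z=\begin{bmatrix}0_{n(N-1)\times n} & I_{n(N-1)}\end{bmatrix}$ and $V=Z(P\otimes I_n)$. $K\in\mathbb{R}^{m\times n}$, $H\in\mathbb{R}^{m\times n(N-1)}$, $G\in\mathbb{R}^{n(N-1)\times n}$, $F\in\mathbb{R}^{n(N-1)\times n(N-1)}$. *)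

(* Defs.v *)
(* Kronecker product: tensmx ( *t ) from mathcomp real_closed mxtens,
   with row index (i,j) |-> i * p + j (standard Kronecker convention). *)
From mathcomp Require Import all_boot all_order all_algebra.
From mathcomp Require Export mxtens.
Set Implicit Arguments. Unset Strict Implicit. Unset Printing Implicit Defensive.
Import GRing.Theory.
Local Open Scope ring_scope.

Definition shiftP (R : pzRingType) (N : nat) : 'M[R]_N :=
  \matrix_(i < N, j < N) ((i : nat) == (j : nat).+1)%:R.

Definition e1 (R : pzRingType) (N : nat) : 'M[R]_(N.+1, 1) := delta_mx ord0 ord0.

(* Z = [0_{n(N-1) x n}  I_{n(N-1)}], here with N = N'.+2 so N-1 = N'.+1 and
   n N = (N'.+2) * n = n + (N'.+1) * n definitionally *)
Definition Zmx (R : pzRingType) (n N' : nat) : 'M[R]_((N'.+1) * n, (N'.+2) * n) :=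
  row_mx (0 : 'M[R]_((N'.+1) * n, n)) (1%:M : 'M[R]_((N'.+1) * n)).

(* Main.v *)
Require Import Defs.
From mathcomp Require Import all_boot all_order all_algebra.
Import GRing.Theory Num.Theory.
Local Open Scope ring_scope.

Lemma E1_eq (R : realFieldType) (n N' : nat) :
  castmx (erefl, mul1n n) (e1 R N'.+1 *t (1%:M : 'M[R]_n))
  = (col_mx (1%:M : 'M[R]_n) (0 : 'M[R]_(N'.+1 * n, n)) : 'M[R]_(N'.+2 * n, n)).
Proof.
apply/matrixP=> i j; rewrite castmxE !mxE /= -!val_eqE /=.
have jn : (j < n)%N by case: j.
rewrite (divn_small jn) eqxx andbT.
case: splitP => k hk.
- have kn : (k < n)%N := ltn_ord k.
  rewrite mxE -val_eqE /= hk divn_small // modn_small // modn_small //.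
  by rewrite eqxx mul1r.
- rewrite mxE /= hk.
  have -> : ((n + k) %/ n)%N == 0%N = false.
    by apply/negbTE; rewrite -lt0n divn_gt0 ?leq_addr //; exact: (leq_ltn_trans (leq0n _) jn).
  by rewrite mul0r.
Qed.

Theorem mainTheorem2 (R : realFieldType) (n m N' : nat)
  (A : 'M[R]_n) (B : 'M[R]_(n, m))
  (X : 'M[R]_(n, (N'.+2) * n)) (U : 'M[R]_(m, (N'.+2) * n)) :
  let N := N'.+2 in
  let PI : 'M[R]_(N * n) := shiftP R N *t (1%:M : 'M[R]_n) in
  let E1 : 'M[R]_(N * n, n) := castmx (erefl, mul1n n) (e1 R N'.+1 *t (1%:M : 'M[R]_n)) in
  let Z := Zmx R n N' in
  let V := Z *m PI in
  let Psi : 'M[R]_(N * n) := col_mx X Z in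
  A *m X + B *m U = X *m PI ->
  X *m E1 = 1%:M ->
  Psi \in unitmx /\
  forall (K : 'M[R]_(m, n)) (H : 'M[R]_(m, (N'.+1) * n))
         (G : 'M[R]_((N'.+1) * n, n)) (F : 'M[R]_((N'.+1) * n)),
    block_mx K H G F *m Psi = col_mx U V ->
    (block_mx (A + B *m K) (B *m H) G F : 'M[R]_(N * n)) = Psi *m PI *m invmx Psi.
Proof.
move=> N PI E1 Z V Psi hAB hE.
have uPsi : Psi \in unitmx.
  have hX : X = row_mx 1%:M (rsubmx (X : 'M[R]_(n, n + N'.+1 * n))).
    rewrite -hE /E1 E1_eq -{1 2}[X](@hsubmxK _ n n (N'.+1 * n)).
    by rewrite mul_row_col mulmx1 mulmx0 addr0.
  rewrite /Psi hX /Z /Zmx -block_mxEv unitmxE det_ublock !det1 mulr1 unitr1.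
  done.
split => // K H G F hK.
move: hK; rewrite /Psi mul_block_col => /eq_col_mx [hU hV].
apply: (canRL (mulmxK uPsi)).
rewrite /Psi mul_block_col mul_col_mx -[Z *m PI]/V -hV -hAB -hU.
by rewrite mulmxDl mulmxDr -!mulmxA addrA.
Qed.
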